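(* Let $r\geq1$ be odd, $m\geq 3$, $n=(r+1)m$, let $u$ be an integer with $\gcd(u,2^m-1)=1$, let $\alpha$ be a primitive element of $\mathbb{F}_{2^{rm}}$, let $0\leq s\leq 2^{rm}-2$, let $\Delta_s=\{\alpha^i\mid s\leq i\leq s+2^{rm-1}-1\}$, and let $f\colon\mathbb{F}_{2^{rm}}\times\mathbb{F}_{2^m}\to\mathbb{F}_2$ be the Boolean function with $\mathrm{supp}(f)=\{(\gamma y^u,y)\mid y\in\mathbb{F}_{2^m}^*,\ \gamma\in\Delta_s\}$. Then $f$ is bent if and only if $r=1$ and $u\equiv 2^t\pmod{2^m-1}$ for some non-negative integer $t$.
   Context: $\mathbb{F}_{2^{rm}}\times\mathbb{F}_{2^m}$ is viewed as an $n$-dimensional $\mathbb{F}_2$-vector space ($\mathbb{F}_{2^m}\subseteq\mathbb{F}_{2^{rm}}$). An $n$-variable Boolean function $f$ ($n$ even) is bent if $|W_f(a,b)|=2^{n/2}$ for all $(a,b)\in\mathbb{F}_{2^{rm}}\times\mathbb{F}_{2^m}$, where $W_f(a,b)=\sum_{(x,y)}(-1)^{f(x,y)+\mathrm{tr}^{rm}_1(ax)+\mathrm{tr}^m_1(by)}$ and $\mathrm{tr}^k_1$ is the absolute trace of $\mathbb{F}_{2^k}$. *)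

(* Defs.v *)
From HB Require Import structures.
From mathcomp Require Import all_boot all_order all_algebra all_field.
Set Implicit Arguments. Unset Strict Implicit. Unset Printing Implicit Defensive.
Import Order.TTheory GRing.Theory Num.Theory.
Local Open Scope ring_scope.

(* L plays the role of F_{2^k} (k = r*m); F_{2^m} is the subfield
   {y in L | y^(2^m) = y}. *)

(* absolute trace tr^k_1 : F_{2^k} -> F_2 (values in the prime subfield of L) *)
Definition tr (L : finFieldType) (k : nat) (z : L) : L :=
  \sum_(i < k) z ^+ (2 ^ i).

Definition inSub (L : finFieldType) (m : nat) (y : L) : bool := y ^+ (2 ^ m) == y.

Definition sgnF2 (L : finFieldType) (e : L) : int := if e == 0 then 1 else -1.

Definition walsh (L : finFieldType) (k m : nat) (f : L -> L -> bool) (a b : L) : int :=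
  \sum_(x : L) \sum_(y : L | inSub m y)
     (-1) ^+ f x y * sgnF2 (tr k (a * x)) * sgnF2 (tr m (b * y)).

Definition bent (L : finFieldType) (k m : nat) (f : L -> L -> bool) : Prop :=
  forall a b : L, inSub m b -> `|walsh k m f a b| = 2 ^+ ((k + m)./2).

Definition Delta (L : finFieldType) (alpha : L) (s k : nat) : {set L} :=
  [set alpha ^+ (s + val i) | i : 'I_(2 ^ k.-1)].

Definition fsupp (L : finFieldType) (m : nat) (u : int) (D : {set L}) (x y : L) : bool :=
  [&& y != 0, inSub m y & [exists g in D, x == g * y ^ u]].

(* Main.v *)
Require Import Defs.
From HB Require Import structures.
From mathcomp Require Import all_boot all_order all_algebra all_field.
From mathcomp Require Import zify ring lra.
Set Implicit Arguments. Unset Strict Implicit. Unset Printing Implicit Defensive.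
Import Order.TTheory GRing.Theory Num.Theory.
Local Open Scope ring_scope.

Section Char2.
Variables (F : finFieldType) (m : nat).
Hypothesis cardF : #|F| = (2 ^ m)%N.
Hypothesis m_gt0 : (0 < m)%N.

Lemma pchar2 : (2%N \in [pchar F]).
Proof. exact: (card_finPcharP cardF). Qed.

Lemma addxx (x : F) : x + x = 0.
Proof. exact: (addrr_pchar2 pchar2). Qed.

Lemma sq_add (x y : F) : (x + y) ^+ 2 = x ^+ 2 + y ^+ 2.
Proof. by rewrite sqrrD mulrn_pchar ?pchar2 // addr0. Qed.

Lemma pow2_add t (x y : F) : (x + y) ^+ (2 ^ t) = x ^+ (2 ^ t) + y ^+ (2 ^ t).
Proof.
elim: t => [|t IH]; first by rewrite !expn0 !expr1.
by rewrite expnSr !exprM IH sq_add.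
Qed.

Lemma pow2_inj t : injective (fun x : F => x ^+ (2 ^ t)).
Proof.
move=> x y /= E.
have : (x + y) ^+ (2 ^ t) = 0 by rewrite pow2_add E addxx.
move/eqP; rewrite expf_eq0 => /andP[_ /eqP].
by move/(canRL (addrK y)); rewrite add0r (oppr_pchar2 pchar2).
Qed.

Lemma pow_card (x : F) : x ^+ (2 ^ m) = x.
Proof. by rewrite -cardF expf_card. Qed.

Lemma pow_N (x : F) : x != 0 -> x ^+ (2 ^ m).-1 = 1.
Proof.
move=> x0; apply: (mulIf x0); rewrite mul1r -exprSr prednK ?pow_card //.
by rewrite expn_gt0.
Qed.

Lemma sum_sq (I : Type) (r : seq I) (P : pred I) (G : I -> F) :
  (\sum_(i <- r | P i) G i) ^+ 2 = \sum_(i <- r | P i) G i ^+ 2.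
Proof.
by apply: (big_morph (fun x : F => x ^+ 2)) => [x y|]; rewrite ?sq_add ?expr0n.
Qed.

Lemma tr_sq (z : F) : tr m z ^+ 2 = tr m z.
Proof.
rewrite /tr sum_sq.
have E : \sum_(i < m) z ^+ (2 ^ i) + z = z + \sum_(i < m) z ^+ (2 ^ i.+1).
  have E1 := big_ord_recl m (fun i : 'I_m.+1 => z ^+ (2 ^ i)).
  have E2 := big_ord_recr m (fun i : 'I_m.+1 => z ^+ (2 ^ i)).
  rewrite /= pow_card in E2; rewrite -E2 E1 /= expn0 expr1; congr (_ + _).
transitivity (\sum_(i < m) z ^+ (2 ^ i.+1)).
  by apply: eq_bigr => i _; rewrite -exprM -expnSr.
by apply: (addrI z); rewrite -E addrC.
Qed.

Lemma tr01 (z : F) : tr m z = 0 \/ tr m z = 1.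
Proof.
have : tr m z * (tr m z - 1) = 0 by rewrite mulrBr mulr1 -expr2 tr_sq subrr.
by move/eqP; rewrite mulf_eq0 subr_eq0 => /orP[] /eqP; [left|right].
Qed.

Lemma trD (x y : F) : tr m (x + y) = tr m x + tr m y.
Proof. by rewrite /tr -big_split; apply: eq_bigr => i _; rewrite pow2_add. Qed.

Lemma tr0 : tr m (0 : F) = 0.
Proof. by rewrite /tr big1 // => i _; rewrite expr0n expn_eq0. Qed.

Lemma tr_pow2 t (z : F) : tr m (z ^+ (2 ^ t)) = tr m z.
Proof.
elim: t => [|t IH]; first by rewrite expn0 expr1.
rewrite expnSr exprM -IH -[RHS]tr_sq /tr sum_sq; apply: eq_bigr => i _.
by rewrite -!exprM (mulnC 2).
Qed.

Definition chi (z : F) : int := sgnF2 (tr m z).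

Lemma chiD x y : chi (x + y) = chi x * chi y.
Proof.
rewrite /chi /sgnF2 trD.
case: (tr01 x) => ->; case: (tr01 y) => ->;
  rewrite ?addr0 ?add0r ?addxx ?eqxx ?oner_eq0 //.
Qed.

Lemma chi0 : chi 0 = 1.
Proof. by rewrite /chi tr0 /sgnF2 eqxx. Qed.

Lemma chi_sq x : chi x * chi x = 1.
Proof. by rewrite /chi /sgnF2; case: ifP. Qed.

Lemma tr_ne0 : exists z : F, tr m z != 0.
Proof.
apply/existsP; apply: contraT; rewrite negb_exists => /forallP H.
pose P : {poly F} := \sum_(i < m) 'X^(2 ^ i).
have m_pred_lt : (m.-1 < m)%N by rewrite ltn_predL.
have Pc : P`_(2 ^ m.-1) = 1.
  rewrite /P coef_sum (bigD1 (Ordinal (m_pred_lt))) //= coefXn eqxx big1 ?addr0 //.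
  move=> i /eqP Hi; rewrite coefXn eqn_exp2l //; case: eqP => // Hi'.
  by case: Hi; apply: val_inj; rewrite /= Hi'.
have P0 : P != 0 by apply/eqP => P0; move: Pc; rewrite P0 coef0 => /eqP; rewrite eq_sym oner_eq0.
have Ps : (size P <= (2 ^ m.-1).+1)%N.
  rewrite /P; apply: (leq_trans (size_sum _ _ _)); apply/bigmax_leqP => i _.
  rewrite size_polyXn ltnS leq_exp2l // -ltnS prednK //.
have := max_poly_roots P0 (rs := enum F).
rewrite enum_uniq -cardE cardF.
have -> : all (root P) (enum F).
  apply/allP => x _; rewrite /root /P horner_sum.
  have := H x; rewrite negbK /tr => /eqP E; rewrite -[X in _ == X]E.
  by apply/eqP; apply: eq_bigr => i _; rewrite hornerXn.
move=> /(_ isT isT) Hl.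
have H2 := leq_trans Hl Ps; rewrite ltnS in H2.
have : (2 ^ m.-1 < 2 ^ m)%N by rewrite ltn_exp2l // ltn_predL.
by rewrite ltnNge H2.
Qed.

Lemma sum_chi (c : F) : \sum_(z : F) chi (c * z) = if c == 0 then (2 ^ m)%:R else 0.
Proof.
case: eqP => [->|/eqP c0].
  under eq_bigr do rewrite mul0r chi0.
  by rewrite sumr_const cardF natz.
have [z0 Hz0] := tr_ne0.
have chiz0 : chi z0 = -1.
  by rewrite /chi /sgnF2; case: (tr01 z0) Hz0 => ->; rewrite ?eqxx // oner_eq0.
have E : \sum_(z : F) chi (c * z) = \sum_(z : F) chi (c * (z + z0 / c)).
  by apply: (reindex_inj (addIr (z0 / c))).
have E2 : \sum_(z : F) chi (c * z) = - \sum_(z : F) chi (c * z).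
  rewrite {1}E -sumrN; apply: eq_bigr => z _.
  by rewrite mulrDr mulrCA divff // mulr1 chiD chiz0 mulrN1.
by move: E2 => /eqP; rewrite -subr_eq0 opprK -mulr2n mulrn_eq0 /= => /eqP.
Qed.

End Char2.

Section Core.
Variables (F : finFieldType) (m : nat) (u : int) (alpha : F) (s : nat).
Hypothesis cardF : #|F| = (2 ^ m)%N.
Hypothesis m_ge3 : (3 <= m)%N.
Hypothesis prim : ((2 ^ m).-1).-primitive_root alpha.

Let m_gt0 : (0 < m)%N. Proof. by apply: leq_trans m_ge3. Qed.
Let LL := (2 ^ m.-1)%N.
Let NN := (2 ^ m).-1.
Let MM := (2 ^ m)%N.
Let D := Delta alpha s m.
Let gam (i : nat) := alpha ^+ (s + i).

Lemma LL_lt_NN : (LL < NN)%N.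
Proof.
rewrite /LL /NN -{2}(prednK m_gt0) expnS mul2n -addnn.
have : (1 < 2 ^ m.-1)%N.
  by rewrite -{1}(expn0 2) ltn_exp2l // -ltnS prednK //; apply: leq_trans m_ge3.
lia.
Qed.

Lemma MM_eq : MM = NN.+1.
Proof. by rewrite /NN prednK // expn_gt0. Qed.

Lemma LL2 : (2 * LL = MM)%N.
Proof. by rewrite /LL /MM -expnS prednK. Qed.

Lemma gam_inj : {in predT &, injective (fun i : 'I_LL => gam i)}.
Proof.
move=> i j _ _ /eqP; rewrite /gam (eq_prim_root_expr prim) eqn_modDl.
have := LL_lt_NN => H.
rewrite !modn_small; first by move/eqP/val_inj.
- exact: ltn_trans (ltn_ord _) H.
- exact: ltn_trans (ltn_ord _) H.
Qed.

Lemma alpha_neq0 : alpha != 0.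
Proof.
apply/eqP => a0; have := prim_expr_order prim; rewrite a0 expr0n.
case: eqP => [|_ /eqP]; last by rewrite eq_sym oner_eq0.
by move/eqP; rewrite -(prednK (expn_gt0 2 m)) /=; have := LL_lt_NN; rewrite /NN => ? ; lia.
Qed.

Lemma gam_neq0 i : gam i != 0.
Proof. by rewrite /gam expf_neq0 // alpha_neq0. Qed.

Lemma sumD (G : F -> int) : \sum_(g in D) G g = \sum_(i < LL) G (gam i).
Proof. by rewrite /D /Delta big_imset //=; apply: gam_inj. Qed.

Definition fD := fsupp m u D.

Lemma sign_bool (b : bool) : (-1 : int) ^+ b = 1 - 2 * (b : int).
Proof. by case: b. Qed.

Lemma walshE a b :
  walsh m m fD a b =
  (if (a == 0) && (b == 0) then (MM * MM)%:R else 0)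
  - 2 * \sum_(y | y != 0) chi m (b * y) * \sum_(i < LL) chi m (a * (gam i * y ^ u)).
Proof.
rewrite /walsh.
have inS (y : F) : inSub m y by rewrite /inSub (pow_card cardF y).
under eq_bigr do rewrite (eq_bigl predT) //.
transitivity (\sum_x \sum_y (chi m (a * x) * chi m (b * y)
     - 2 * ((fD x y : int) * (chi m (a * x) * chi m (b * y))))).
  apply: eq_bigr => x _; apply: eq_bigr => y _.
  rewrite sign_bool /chi; ring.
rewrite (eq_bigr (fun x => \sum_y chi m (a * x) * chi m (b * y)
    - 2 * \sum_y (fD x y : int) * (chi m (a * x) * chi m (b * y)))); last first.
  by move=> x _; rewrite sumrB mulr_sumr.
rewrite sumrB -mulr_sumr; congr (_ - 2 * _).
  rewrite -big_distrlr /= !(sum_chi cardF m_gt0).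
  by case: eqP; case: eqP => _ _ /=; rewrite ?mulr0 ?mul0r // /MM natrM.
rewrite exchange_big /= [RHS]big_mkcond; apply: eq_bigr => y _.
case: eqP => [->|/eqP y0] /=.
  by apply: big1 => x _; rewrite /fD /fsupp eqxx /= mul0r.
rewrite [RHS]mulrC mulr_suml; symmetry.
have yu0 : y ^ u != 0 by rewrite expfz_neq0.
transitivity (\sum_(x in [set g * y ^ u | g in D]) chi m (a * x) * chi m (b * y)).
  rewrite big_imset /=; last by move=> g1 g2 _ _; apply: (mulIf yu0).
  by rewrite sumD.
rewrite big_mkcond; apply: eq_bigr => x _.
rewrite /fD /fsupp y0 inS /=.
have -> : (x \in [set g * y ^ u | g in D]) = [exists g in D, x == g * y ^ u].
  apply/imsetP/existsP => [[g gD ->]|[g /andP[gD /eqP ->]]]; last by exists g.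
  by exists g; rewrite gD eqxx.
by case: ifP => _; rewrite ?mul1r ?mul0r.
Qed.

End Core.

Section Dir2.
Variables (F : finFieldType) (m : nat) (u : int) (alpha : F) (s : nat).
Hypothesis cardF : #|F| = (2 ^ m)%N.
Hypothesis m_ge3 : (3 <= m)%N.
Hypothesis prim : ((2 ^ m).-1).-primitive_root alpha.

Let m_gt0 : (0 < m)%N. Proof. by apply: leq_trans m_ge3. Qed.
Let LL := (2 ^ m.-1)%N.
Let NN := (2 ^ m).-1.
Let MM := (2 ^ m)%N.
Let gam (i : nat) := alpha ^+ (s + i).

Lemma pow_modz (y : F) (w w' : int) : y != 0 -> (w = w' %[mod NN%:Z])%Z -> y ^ w = y ^ w'.
Proof.
move=> y0 /eqP; rewrite eqz_mod_dvd => /dvdzP[q Hq].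
have -> : w = w' + NN%:Z * q by rewrite mulrC -Hq addrC subrK.
by rewrite expfzDr // -exprz_exp -exprnP (pow_N cardF) // exp1rz mulr1.
Qed.

Lemma sum_nz (G : F -> int) : \sum_(y | y != 0) G y = \sum_y G y - G 0.
Proof. by rewrite [\sum_y G y](bigD1 0) //= addrC addrK. Qed.

Lemma sum_chi_pow t (d : F) :
  \sum_(y | y != 0) chi m (d * y ^+ (2 ^ t)) = (if d == 0 then MM%:R else 0) - 1.
Proof.
rewrite sum_nz expr0n expn_eq0 /= mulr0 chi0.
rewrite -(reindex_inj (F := fun w => chi m (d * w)) (P := predT) (pow2_inj cardF (t:=t))) /=.
by rewrite (sum_chi cardF m_gt0).
Qed.

Lemma walsh_dir2 t (Hu : (u = (2 ^ t)%:Z %[mod NN%:Z])%Z) a b :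
  `|walsh m m (fsupp m u (Delta alpha s m)) a b| = MM%:R.
Proof.
rewrite (walshE u s cardF m_ge3 prim).
set d := fun i : nat => b ^+ (2 ^ t) + a * gam i.
have E : \sum_(y | y != 0) chi m (b * y) *
     \sum_(i < LL) chi m (a * (gam i * y ^ u))
   = \sum_(i < LL) ((if d i == 0 then MM%:R else 0) - 1).
  transitivity (\sum_(i < LL) \sum_(y | y != 0) chi m (d i * y ^+ (2 ^ t))).
    rewrite exchange_big /=; apply: eq_bigr => y y0.
    rewrite mulr_sumr; apply: eq_bigr => i _.
    have Hc : chi m (b * y) = chi m ((b * y) ^+ (2 ^ t)) by rewrite /chi (tr_pow2 cardF).
    rewrite (pow_modz y0 Hu) -exprnP Hc -(chiD cardF) /d mulrDl exprMn mulrA //.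
  by apply: eq_bigr => i _; rewrite sum_chi_pow.
rewrite E sumrB sumr_const card_ord.
have HM : (MM%:R : int) = 2 * LL%:R by rewrite /MM /LL -natrM -expnS prednK.
rewrite -[1 *+ LL]mulr_natr mul1r.
case: (eqVneq a 0) => [a0|a0].
  rewrite (eq_bigr (fun _ => if b == 0 then MM%:R else 0)); last first.
    by move=> i _; rewrite /d a0 mul0r addr0 expf_eq0 expn_gt0.
  rewrite /= sumr_const card_ord -[_ *+ LL]mulr_natr -/MM.
  case: (b == 0) => /=.
  - rewrite natrM HM; set l := (LL%:R : int).
    have -> : 2 * l * (2 * l) - 2 * (2 * l * l - l) = 2 * l by ring.
    by rewrite -HM normr_nat.
  - rewrite mul0r sub0r sub0r mulrN opprK -HM; apply: normr_nat.
rewrite andFb.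
have dinj : forall i j : 'I_LL, d i == 0 -> d j == 0 -> i = j.
  move=> i j; rewrite /d !(addr_eq0) !(oppr_pchar2 (pchar2 cardF)) => /eqP Hi /eqP Hj.
  have : a * gam i = a * gam j by rewrite -Hi -Hj.
  move/(mulfI a0) => H; exact: (gam_inj (s:=s) cardF m_ge3 prim isT isT H).
case: (pickP (fun i : 'I_LL => d i == 0)) => [i0 Hi0|Hn].
  rewrite (bigD1 i0) //= Hi0 big1 ?addr0; last first.
    by move=> j Hji; case: ifP => // /(dinj _ _ Hi0) Ej; rewrite Ej eqxx in Hji.
  rewrite HM; set l := (LL%:R : int).
  have -> : 0 - 2 * (2 * l - l) = - (2 * l) by ring.
  by rewrite normrN -HM normr_nat.
rewrite big1; last by move=> i _; rewrite Hn.
rewrite HM; set l := (LL%:R : int).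
have -> : 0 - 2 * (0 - l) = 2 * l by ring.
by rewrite -HM normr_nat.
Qed.

End Dir2.

Section Dir1.
Variables (F : finFieldType) (m : nat) (u : int) (alpha : F) (s : nat).
Hypothesis cardF : #|F| = (2 ^ m)%N.
Hypothesis m_ge3 : (3 <= m)%N.
Hypothesis prim : ((2 ^ m).-1).-primitive_root alpha.

Let m_gt0 : (0 < m)%N. Proof. by apply: leq_trans m_ge3. Qed.
Let LL := (2 ^ m.-1)%N.
Let NN := (2 ^ m).-1.
Let MM := (2 ^ m)%N.
Let gam (i : nat) := alpha ^+ (s + i).

Definition EE (c : F) : int := 1 + \sum_(y | y != 0) chi m y * chi m (c * y ^ u).

Lemma HM : (MM%:R : int) = 2 * LL%:R.
Proof. by rewrite /MM /LL -natrM -expnS prednK. Qed.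

Lemma MM_gt0 : (0 < MM)%N. Proof. by rewrite expn_gt0. Qed.

Lemma walsh_EE a : a != 0 ->
  walsh m m (fsupp m u (Delta alpha s m)) a 1 = MM%:R - 2 * \sum_(i < LL) EE (a * gam i).
Proof.
move=> a0; rewrite (walshE u s cardF m_ge3 prim) (negbTE a0) /= sub0r.
rewrite HM.
have -> : \sum_(i < LL) EE (a * gam i) =
  \sum_(i < LL) (1 + \sum_(y | y != 0) chi m (1 * y) * chi m (a * (gam i * y ^ u))).
  by apply: eq_bigr => i _; rewrite /EE; congr (_ + _); apply: eq_bigr => y _; rewrite mul1r mulrA.
rewrite big_split /= sumr_const card_ord.
have -> : \sum_(y | y != 0) chi m (1 * y) * \sum_(i < LL) chi m (a * (gam i * y ^ u)) =
   \sum_(i < LL) \sum_(y | y != 0) chi m (1 * y) * chi m (a * (gam i * y ^ u)).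
  by rewrite exchange_big /=; apply: eq_bigr => y _; rewrite mulr_sumr.
rewrite -[1 *+ LL]mulr_natr mul1r; ring.
Qed.

Lemma norm_case (x : int) : `|MM%:R - 2 * x| = MM%:R -> x = 0 \/ x = MM%:R.
Proof.
move/eqP; rewrite eqr_norml => /andP[/orP[] /eqP H _].
  by left; move: H; lia.
by right; move: H; lia.
Qed.

Lemma sumEE_case a : a != 0 ->
  `|walsh m m (fsupp m u (Delta alpha s m)) a 1| = MM%:R ->
  \sum_(i < LL) EE (a * gam i) = 0 \/ \sum_(i < LL) EE (a * gam i) = MM%:R.
Proof. by move=> a0; rewrite walsh_EE //; apply: norm_case. Qed.

Hypothesis Hb : forall a, `|walsh m m (fsupp m u (Delta alpha s m)) a 1| = MM%:R.

Lemma a_neq0 : alpha != 0.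
Proof. exact: (alpha_neq0 cardF m_ge3 prim). Qed.

Lemma EE_shift c : c != 0 -> (MM%:Z %| EE (c * alpha ^+ LL) - EE c)%Z.
Proof.
move=> c0.
have g0 : gam 0 != 0 by rewrite /gam expf_neq0 // a_neq0.
set a := c / gam 0.
have a0 : a != 0 by rewrite /a mulf_neq0 // invr_eq0.
have aa0 : a * alpha != 0 by rewrite mulf_neq0 // a_neq0.
set g := fun i : nat => EE (a * gam i).
have tel : \sum_(i < LL) EE (a * alpha * gam i) - \sum_(i < LL) EE (a * gam i)
    = EE (c * alpha ^+ LL) - EE c.
  transitivity (\sum_(0 <= i < LL) (g i.+1 - g i)).
    rewrite sumrB !big_mkord; congr (_ - _); apply: eq_bigr => i _.
    by rewrite /g /gam addnS exprS mulrA (mulrC a) -mulrA -mulrA mulrA.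
  rewrite telescope_sumr // /g /a /gam addn0 exprD mulrA divfK //.
  by rewrite expf_neq0 // a_neq0.
rewrite -tel.
case: (sumEE_case aa0 (Hb _)) => ->; case: (sumEE_case a0 (Hb _)) => ->;
  rewrite ?subrr ?subr0 ?sub0r ?rpredN ?dvdz0 // natz dvdzz //.
Qed.

Lemma EE_cong_pow j : (MM%:Z %| EE (alpha ^+ (j * LL)) - EE 1%R)%Z.
Proof.
elim: j => [|j IH]; first by rewrite mul0n expr0 subrr dvdz0.
have X0 : alpha ^+ (j * LL) != 0 by rewrite expf_neq0 // a_neq0.
rewrite mulSn exprD mulrC.
have -> : EE (alpha ^+ (j * LL) * alpha ^+ LL) - EE 1 =
  (EE (alpha ^+ (j * LL) * alpha ^+ LL) - EE (alpha ^+ (j * LL))) + (EE (alpha ^+ (j * LL)) - EE 1).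
  by rewrite addrA subrK.
by rewrite rpredD // EE_shift.
Qed.

Lemma EE_cong c : c != 0 -> (MM%:Z %| EE c - EE 1%R)%Z.
Proof.
move=> c0; have [k ->] := prim_rootP prim (pow_N cardF c0).
have -> : alpha ^+ k = alpha ^+ ((2 * k) * LL).
  have HL : (2 * LL = NN.+1)%N by rewrite /LL /NN -expnS (prednK m_gt0) prednK // expn_gt0.
  rewrite mulnC mulnA (mulnC LL) HL mulSn exprD exprM (prim_expr_order prim).
  by rewrite expr1n mulr1.
exact: EE_cong_pow.
Qed.

Lemma sumEE : \sum_(c | c != 0) EE c = MM%:R.
Proof.
rewrite sum_nz.
have -> : EE 0 = 0.
  rewrite /EE (eq_bigr (fun y => chi m (1 * y))); last first.
    by move=> y _; rewrite mul0r chi0 mulr1 mul1r.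
  by rewrite sum_nz (sum_chi cardF m_gt0) oner_eq0 mulr0 chi0 sub0r addrN.
rewrite subr0 /EE big_split /= sumr_const cardF.
rewrite exchange_big /= big1 ?addr0; first by rewrite -[1 *+ _]mulr_natr mul1r.
move=> y y0; rewrite -mulr_sumr (eq_bigr (fun c => chi m (y ^ u * c))); last first.
  by move=> c _; rewrite mulrC.
by rewrite (sum_chi cardF m_gt0) expfz_eq0 (negbTE y0) andbF mulr0.
Qed.

Lemma EE1_dvd : (MM%:Z %| EE 1%R)%Z.
Proof.
pose k c := ((EE c - EE 1%R) %/ MM%:Z)%Z.
have Ek : forall c, c != 0 -> EE c = EE 1 + k c * MM%:Z.
  by move=> c c0; rewrite /k divzK ?EE_cong // addrC subrK.
have := sumEE; rewrite (eq_bigr (fun c => EE 1 + k c * MM%:Z)); last first.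
  by move=> c c0; rewrite Ek.
rewrite big_split /= -mulr_suml sum_nz sumr_const cardF => H.
apply/dvdzP; exists (EE 1 + \sum_(i | i != 0) k i - 1).
rewrite natz in H; move: H; rewrite -[EE 1 *+ _]mulr_natr natz.
set K := \sum_(i | i != 0) k i; set e := EE 1; set M := (MM : int).
move=> H.
have -> : (e + K - 1) * M = e * M - e + K * M - M + e by ring.
by rewrite H subrr add0r.
Qed.

Lemma chi_le1 (x y : F) : chi m x * chi m y <= 1.
Proof. by rewrite /chi /sgnF2; case: ifP; case: ifP. Qed.

Lemma EE_le c : EE c <= MM%:R.
Proof.
have : \sum_(y | y != 0) chi m y * chi m (c * y ^ u) <= \sum_(y : F | y != 0) 1.
  by apply: ler_sum => y _; apply: chi_le1.
rewrite [X in _ <= X]sum_nz sumr_const cardF /EE => H.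
rewrite -(lerD2l (-1)) addrA addNr add0r; apply: (le_trans H).
by rewrite -[1 *+ _]mulr_natr mul1r addrC.
Qed.

Lemma chi_tr (x y : F) : chi m x = chi m y -> tr m x = tr m y.
Proof.
rewrite /chi /sgnF2; case: (tr01 cardF x) => ->; case: (tr01 cardF y) => -> //;
  rewrite ?eqxx ?oner_eq0 //.
Qed.

Lemma exists_c0 : exists2 c0 : F, c0 != 0 & forall y, y != 0 -> tr m y = tr m (c0 * y ^ u).
Proof.
case: (pickP (fun c => (c != 0) && (0 < EE c))) => [c0 /andP[c0n pos] | Hn]; last first.
  exfalso; have : \sum_(c | c != 0) EE c <= 0.
    by apply: sumr_le0 => c c0; move: (Hn c); rewrite c0 /= => /negbT; rewrite -leNgt.
  by rewrite sumEE leNgt ltr0n MM_gt0.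
exists c0 => //.
have Ec0 : EE c0 = MM%:R.
  have : (MM%:Z %| EE c0)%Z.
    have -> : EE c0 = (EE c0 - EE 1) + EE 1 by rewrite subrK.
    by rewrite rpredD ?EE_cong ?EE1_dvd.
  move/dvdzP => [q Hq]; have := EE_le c0; rewrite Hq in pos *.
  rewrite natz; move: pos; have := MM_gt0; set M := MM => HM0 pos le.
  have HM' : (0 < M%:Z) by rewrite ltz_nat.
  have q1 : q = 1 by nia.
  by rewrite q1 mul1r.
have Z : \sum_(y | y != 0) (1 - chi m y * chi m (c0 * y ^ u)) = 0.
  rewrite sumrB [X in X - _]sum_nz sumr_const cardF.
  rewrite -[1 *+ _]mulr_natr mul1r.
  have HS : \sum_(y | y != 0) chi m y * chi m (c0 * y ^ u) = MM%:R - 1.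
    by rewrite -Ec0 /EE addrAC subrr add0r.
  by rewrite HS subrr.
move=> y y0; apply: chi_tr.
have Hnn : forall z : F, z != 0 -> 0 <= 1 - chi m z * chi m (c0 * z ^ u).
  by move=> z _; rewrite subr_ge0 chi_le1.
have : 1 - chi m y * chi m (c0 * y ^ u) = 0 by apply: (psumr_eq0P Hnn Z).
move/eqP; rewrite subr_eq0 eq_sym => /eqP H.
by rewrite -[LHS]mulr1 -H mulrA chi_sq mul1r.
Qed.

End Dir1.

Section PowSum.
Variables (F : finFieldType) (m : nat) (alpha : F).
Hypothesis cardF : #|F| = (2 ^ m)%N.
Hypothesis m_ge3 : (3 <= m)%N.
Hypothesis prim : ((2 ^ m).-1).-primitive_root alpha.

Let m_gt0 : (0 < m)%N. Proof. by apply: leq_trans m_ge3. Qed.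
Let NN := (2 ^ m).-1.

Lemma sum_nzF (G : F -> F) : \sum_(y | y != 0) G y = \sum_y G y - G 0.
Proof. by rewrite [\sum_y G y](bigD1 0) //= addrC addrK. Qed.

Lemma Psum_nd j : ~~ (NN %| j)%N -> \sum_(y : F | y != 0) y ^+ j = 0.
Proof.
move=> Hj.
have a0 : alpha != 0 := alpha_neq0 cardF m_ge3 prim.
have aj : alpha ^+ j != 1.
  by rewrite -(expr0 alpha) (eq_prim_root_expr prim) mod0n.
have E : \sum_(y : F | y != 0) y ^+ j = alpha ^+ j * \sum_(y : F | y != 0) y ^+ j.
  rewrite [LHS](reindex_inj (mulfI a0)) /= mulr_sumr.
  rewrite (eq_bigl (fun y => y != 0)); last by move=> y; rewrite mulf_eq0 (negbTE a0).
  by apply: eq_bigr => y _; rewrite exprMn.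
move/eqP: E; rewrite -subr_eq0 -{1}(mul1r (\sum_(y | y != 0) _)) -mulrBl mulf_eq0.
by rewrite subr_eq0 eq_sym (negbTE aj) => /eqP.
Qed.

Lemma Psum_d j : (NN %| j)%N -> \sum_(y : F | y != 0) y ^+ j = -1.
Proof.
move=> /dvdnP[q ->].
rewrite (eq_bigr (fun _ => 1)); last first.
  by move=> y y0; rewrite mulnC exprM (pow_N cardF) // expr1n.
rewrite sum_nzF sumr_const cardF.
have -> : (1 : F) *+ 2 ^ m = 0.
  apply/eqP; rewrite -mulr_natl mulr1 -(dvdn_pcharf (pchar2 cardF)).
  by rewrite -(prednK m_gt0) expnS dvdn_mulr.
by rewrite sub0r.
Qed.

Lemma final_step (u : int) (c0 : F) : gcdz u NN%:Z = 1 -> c0 != 0 ->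
  (forall y, y != 0 -> tr m y = tr m (c0 * y ^ u)) ->
  exists t : nat, (u = (2 ^ t)%:Z %[mod NN%:Z])%Z.
Proof.
move=> gu c0n Htr.
have NNpos : (7 <= NN)%N.
  rewrite /NN; have : (2 ^ 3 <= 2 ^ m)%N by rewrite leq_exp2l.
  by rewrite (expnS 2 2); lia.
have NN0 : NN%:Z != 0 by apply/eqP => H; move: NNpos; rewrite -(absz_nat NN) H /=.
set v := `|(u %% NN%:Z)%Z|%N.
have Hv : (u %% NN%:Z)%Z = v%:Z by rewrite /v gez0_abs // modz_ge0.
have vlt : (v < NN)%N.
  by have := ltz_mod u NN0; rewrite Hv.
have cop : coprime v NN.
  by move: gu; rewrite -gcdz_modl Hv /gcdz /= => [[H]]; rewrite /coprime H.
have vpos : (0 < v)%N.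
  case: (posnP v) => // v0; move: cop; rewrite v0 /coprime gcd0n; lia.
have powv : forall y : F, y != 0 -> y ^ u = y ^+ v.
  move=> y y0; rewrite exprnP -Hv; apply: (pow_modz cardF y0).
  by rewrite /= modz_mod.
case: (boolP [exists i : 'I_m, (v == 2 ^ i %% NN)%N]).
  move/existsP=> [i /eqP Hi]; exists i; rewrite Hv modz_nat -Hi //.
rewrite negb_exists => /forallP Hn; exfalso.
have aux1 : forall i : 'I_m, ~~ (NN %| 2 ^ i + (NN - v))%N.
  move=> i; apply/negP => H; move/negP: (Hn i); apply; apply/eqP.
  have E : (2 ^ i + (NN - v) + v = 2 ^ i + NN)%N by rewrite -addnA subnK // ltnW.
  move: H; rewrite /dvdn => /eqP H.
  transitivity ((0 + v) %% NN)%N; first by rewrite add0n modn_small.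
  by symmetry; rewrite -modnDr -E -modnDml H.
have aux2 : forall i : nat, (0 < i < m)%N -> ~~ (NN %| v * 2 ^ i + (NN - v))%N.
  move=> i /andP[i0 im]; apply/negP => H.
  have w1 : (2 <= 2 ^ i)%N by rewrite -{1}(expn1 2) leq_exp2l.
  have w2 : (2 ^ i < 2 ^ m)%N by rewrite ltn_exp2l.
  have E : (v * 2 ^ i + (NN - v) = v * (2 ^ i - 1) + NN)%N.
    have := leq_pmulr v (ltnW w1); rewrite mulnBr muln1.
    move: (v * 2 ^ i)%N vlt => x; lia.
  move: H; rewrite E dvdn_addl // Gauss_dvdr; last by rewrite coprime_sym.
  move/dvdn_leq; rewrite /NN; lia.
have key : \sum_(y : F | y != 0) y ^+ (NN - v) * tr m y
         = \sum_(y : F | y != 0) y ^+ (NN - v) * tr m (c0 * y ^+ v).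
  by apply: eq_bigr => y y0; rewrite -powv // -Htr.
have L0 : \sum_(y : F | y != 0) y ^+ (NN - v) * tr m y = 0.
  rewrite /tr (eq_bigr (fun y => \sum_(i < m) y ^+ (2 ^ i + (NN - v)))); last first.
    by move=> y _; rewrite mulr_sumr; apply: eq_bigr => i _; rewrite exprD mulrC.
  rewrite exchange_big /=; apply: big1 => i _; exact: Psum_nd.
have R0 : \sum_(y : F | y != 0) y ^+ (NN - v) * tr m (c0 * y ^+ v) = - c0.
  rewrite /tr (eq_bigr (fun y => \sum_(i < m) c0 ^+ (2 ^ i) * y ^+ (v * 2 ^ i + (NN - v))));
    last first.
    move=> y _; rewrite mulr_sumr; apply: eq_bigr => i _.
    by rewrite exprMn -exprM exprD mulrCA (mulrC (y ^+ (NN - v))).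
  rewrite exchange_big /= (bigD1 (Ordinal m_gt0)) /=; last by [].
  rewrite -mulr_sumr expn0 expr1 muln1 (subnKC (ltnW vlt)) (Psum_d (dvdnn NN)) mulrN1.
  rewrite big1; first by rewrite addr0.
  move=> i Hi; rewrite -mulr_sumr Psum_nd; first by rewrite mulr0.
  apply: aux2; rewrite ltn_ord andbT lt0n; apply: contra Hi => /eqP Hi.
  by apply/eqP; apply: val_inj.
move: key; rewrite L0 R0 => /eqP; rewrite eq_sym oppr_eq0 (negbTE c0n) //.
Qed.

End PowSum.
Lemma W00 (L : finFieldType) (k m : nat) (u : int) (alpha : L) (s : nat) :
  #|L| = (2 ^ k)%N -> (3 <= k)%N -> ((2 ^ k).-1).-primitive_root alpha ->
  walsh k m (fsupp m u (Delta alpha s k)) 0 0 = (2 ^ k)%:R.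
Proof.
move=> cardL k3 prim.
set D := Delta alpha s k.
have cD : #|D| = (2 ^ k.-1)%N.
  rewrite /D /Delta card_imset ?card_ord //.
  by move=> i j /(gam_inj cardL k3 prim isT isT).
rewrite /walsh exchange_big /=.
transitivity (\sum_(y : L | inSub m y) (if y == 0 then (2 ^ k)%:R else 0 : int)).
  apply: eq_bigr => y Sy.
  transitivity (\sum_x (1 - 2 * (fsupp m u D x y : int))).
    apply: eq_bigr => x _; rewrite !mul0r (tr0 L k) (tr0 L m) /sgnF2 eqxx !mulr1.
    by case: (fsupp m u D x y).
  rewrite sumrB sumr_const cardL -mulr_sumr.
  case: eqP => [->|/eqP y0].
    rewrite big1; last by move=> x _; rewrite /fsupp eqxx.
    by rewrite mulr0 subr0 -[1 *+ _]mulr_natr mul1r.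
  have yu0 : y ^ u != 0 by rewrite expfz_neq0.
  have -> : \sum_x (fsupp m u D x y : int) = #|D|%:R.
    transitivity (\sum_(x in [set g * y ^ u | g in D]) (1 : int)); last first.
      rewrite big_imset /=; last by move=> g1 g2 _ _; apply: (mulIf yu0).
      by rewrite sumr_const -[1 *+ _]mulr_natr mul1r.
    rewrite [RHS]big_mkcond; apply: eq_bigr => x _.
    rewrite /fsupp y0 Sy /=.
    have -> : (x \in [set g * y ^ u | g in D]) = [exists g in D, x == g * y ^ u].
      apply/imsetP/existsP => [[g gD ->]|[g /andP[gD /eqP ->]]]; last by exists g.
      by exists g; rewrite gD eqxx.
    by case: ifP.
  have k0 : (0 < k)%N by apply: leq_trans k3.
  rewrite cD -[1 *+ _]mulr_natr mul1r -natrM -expnS (prednK k0) subrr.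
  done.
rewrite (bigD1 0) /=; last by rewrite /inSub expr0n expn_eq0.
rewrite eqxx big1; first by rewrite addr0.
by move=> y /andP[_ /negbTE ->].
Qed.

Unset Implicit Arguments.
Theorem corollary1 (L : finFieldType) (r m : nat) (u : int) (alpha : L) (s : nat) :
  odd r -> (3 <= m)%N -> #|L| = (2 ^ (r * m))%N ->
  gcdz u ((2 ^ m).-1)%:Z = 1 ->
  (#|L|.-1).-primitive_root alpha ->
  (s <= 2 ^ (r * m) - 2)%N ->
  bent (r * m) m (fsupp m u (Delta alpha s (r * m)))
  <-> (r = 1%N /\ exists t : nat, (u = (2 ^ t)%:Z %[mod ((2 ^ m).-1)%:Z])%Z).
Proof.
move=> oddr m3 cardL gu prim _.
have r0 : (0 < r)%N by move: oddr; case: (r) => //.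
have k3 : (3 <= r * m)%N by apply: leq_trans m3 _; rewrite leq_pmull.
rewrite cardL in prim.
have two_pow (n : nat) : (2 : int) ^+ n = (2 ^ n)%:R by rewrite natrX.
split.
- move=> Hb.
  have W0 := Hb 0 0.
  rewrite (W00 m u s cardL k3 prim) normr_nat two_pow in W0.
  have {W0} W0 : (2 ^ (r * m) = 2 ^ ((r * m + m)./2))%N.
    by apply/eqP; rewrite -(eqr_nat int) W0 /inSub ?expr0n ?expn_eq0.
  move/eqP: W0; rewrite eqn_exp2l // => /eqP W0.
  have Hd := odd_double_half (r * m + m).
  rewrite -W0 -addnn in Hd.
  have r1 : r = 1%N.
    apply/eqP; rewrite eqn_leq r0 andbT; apply: contraT; rewrite -ltnNge => r2.
    have := leq_mul r2 (leqnn m); move: Hd m3; case: (odd _) => /=; lia.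
  split => //.
  subst r; rewrite mul1n in cardL prim Hb.
  have Hb1 : forall a : L, `|walsh m m (fsupp m u (Delta alpha s m)) a 1| = (2 ^ m)%:R.
    move=> a; rewrite (Hb a 1) ?two_pow ?addnn ?doubleK //.
    by rewrite /inSub expr1n.
  have [c0 c0n Htr] := exists_c0 cardL m3 prim Hb1.
  exact: (final_step cardL m3 prim gu c0n Htr).
- move=> [r1 [t Ht]]; subst r; rewrite mul1n in cardL prim *.
  move=> a b _; rewrite (walsh_dir2 s cardL m3 prim Ht) two_pow addnn doubleK //.
Qed.
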